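(* Let $\mathbf A\in\mathbb R^{m\times n}$ with $0<m<n$ and suppose there is $\Delta>0$ such that $\|\mathbf h\|_1\ge\sqrt{m/\Delta}\,\|\mathbf h\|_2$ for all nonzero $\mathbf h\in\mathrm{Null}(\mathbf A)$. Let $\mathbf x^0\in\mathbb R^n$ be arbitrary, $\mathcal S$ the set of indices of its $k$ largest components in magnitude, $\mathcal Z=\{1,\dots,n\}\setminus\mathcal S$, and let $\alpha>\|\mathbf x^0_{\mathcal Z}\|_\infty$. Define $C_3:=\frac{\alpha+\|\mathbf x^0_{\mathcal S}\|_\infty}{\alpha-\|\mathbf x^0_{\mathcal Z}\|_\infty}$ and $C_4:=\frac{2\alpha}{\alpha-\|\mathbf x^0_{\mathcal Z}\|_\infty}$. If $m\ge 4(1+C_3)^2k\Delta$, then the solution $\mathbf x^*$ of problem (P2) with $\mathbf b=\mathbf A\mathbf x^0$ satisfies $$\|\mathbf x^*-\mathbf x^0\|_1\le 4C_4\|\mathbf x^0_{\mathcal Z}\|_1.$$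
   Context: Problem (P2) is $\min_{\mathbf x}\{\|\mathbf x\|_1+\frac{1}{2\alpha}\|\mathbf x\|_2^2:\ \mathbf A\mathbf x=\mathbf b\}$. $\mathbf x_{\mathcal S}$ is the restriction of $\mathbf x$ to coordinates in $\mathcal S$. *)

(* Defs.v *)
From HB Require Import structures.
From mathcomp Require Import all_boot all_order all_algebra.
Set Implicit Arguments. Unset Strict Implicit. Unset Printing Implicit Defensive.
Import Order.TTheory GRing.Theory Num.Theory.
Local Open Scope ring_scope.

Definition norm1 (R : realDomainType) (n : nat) (x : 'cV[R]_n) : R :=
  \sum_(i < n) `|x i 0|.

Definition norm2 (R : rcfType) (n : nat) (x : 'cV[R]_n) : R :=
  Num.sqrt (\sum_(i < n) (x i 0) ^+ 2).

Definition normInf (R : realDomainType) (n : nat) (x : 'cV[R]_n) : R :=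
  \big[Num.max/0]_(i < n) `|x i 0|.

(* x_S : restriction of x to the coordinates in S (other coordinates set to 0;
   all norms coincide with those of the subvector indexed by S). *)
Definition restrict (R : ringType) (n : nat) (S : {set 'I_n}) (x : 'cV[R]_n)
  : 'cV[R]_n := \col_i (if i \in S then x i 0 else 0).

Definition largest_k_support (R : realDomainType) (n k : nat)
  (x : 'cV[R]_n) (S : {set 'I_n}) : Prop :=
  #|S| = k /\ forall i j, i \in S -> j \notin S -> `|x j 0| <= `|x i 0|.

Definition P2_obj (R : rcfType) (n : nat) (alpha : R) (x : 'cV[R]_n) : R :=
  norm1 x + (2 * alpha)^-1 * (norm2 x) ^+ 2.

Definition is_P2_solution (R : rcfType) (m n : nat) (A : 'M[R]_(m, n))
  (b : 'cV[R]_m) (alpha : R) (x : 'cV[R]_n) : Prop :=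
  A *m x = b /\ forall y : 'cV[R]_n, A *m y = b -> P2_obj alpha x <= P2_obj alpha y.

(* Main.v *)
Require Import Defs.
From HB Require Import structures.
From mathcomp Require Import all_boot all_order all_algebra.
From mathcomp Require Import ring lra.
Import Order.TTheory GRing.Theory Num.Theory.
Local Open Scope ring_scope.

Lemma normInf_ge (R : realDomainType) (n : nat) (x : 'cV[R]_n) (i : 'I_n) :
  `|x i 0| <= normInf x.
Proof. exact: (le_bigmax 0 (fun i => `|x i 0|) i). Qed.

Lemma cs_sum (R : realFieldType) (I : finType) (P : {set I}) (a : I -> R) :
  (\sum_(i in P) a i) ^+ 2 <= #|P|%:R * \sum_(i in P) a i ^+ 2.
Proof.
have H2 : 2 * (\sum_(i in P) a i) ^+ 2 <=
    \sum_(i in P) \sum_(j in P) (a i ^+ 2 + a j ^+ 2).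
  rewrite expr2 big_distrl /= mulr_sumr; apply: ler_sum => i _.
  rewrite big_distrr /= mulr_sumr; apply: ler_sum => j _.
  have := sqr_ge0 (a i - a j); rewrite /=. move=> h.
  have -> : a i ^+ 2 + a j ^+ 2 = (a i - a j) ^+ 2 + 2 * (a i * a j) by ring.
  by rewrite lerDr.
have E : \sum_(i in P) \sum_(j in P) (a i ^+ 2 + a j ^+ 2) =
    2 * (#|P|%:R * \sum_(i in P) a i ^+ 2).
  under eq_bigr => i _ do rewrite big_split /= sumr_const.
  rewrite big_split /= sumr_const sumrMnl.
  rewrite -mulr_natl; ring.
rewrite E in H2. by rewrite -(ler_pM2l (_ : 0 < 2 :> R)).
Qed.

Lemma normInf_ge0 (R : realDomainType) (n : nat) (x : 'cV[R]_n) : 0 <= normInf x.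
Proof.
rewrite /normInf; elim/big_ind: _ => //.
by move=> p q hp hq; rewrite le_max hp.
Qed.

Lemma pt_S (R : realFieldType) (alpha s u v : R) :
  0 < alpha -> `|u| <= s ->
  - (2 * (alpha + s) * `|v - u|) <= 2 * alpha * (`|v| - `|u|) + (v ^+ 2 - u ^+ 2).
Proof.
move=> a0 us; set w := v - u.
have E : v ^+ 2 - u ^+ 2 = 2 * (u * w) + w ^+ 2 by rewrite /w; ring.
have n1 : `|u| <= `|v| + `|w|.
  have -> : u = v - w by rewrite /w; ring.
  exact: ler_normB.
have n2 : - (u * w) <= `|u| * `|w| by rewrite -normrM -normrN ler_norm.
have n3 : `|u| * `|w| <= s * `|w| by apply: ler_wpM2r.
have w2 : 0 <= w ^+ 2 := sqr_ge0 w.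
have f1 : 2 * alpha * (- `|w|) <= 2 * alpha * (`|v| - `|u|).
  by rewrite ler_pM2l ?mulr_gt0 //; lra.
lra.
Qed.

Lemma pt_Z (R : realFieldType) (alpha a u v : R) :
  0 < alpha -> `|u| <= a ->
  2 * (alpha - a) * `|v - u| - 4 * alpha * `|u|
   <= 2 * alpha * (`|v| - `|u|) + (v ^+ 2 - u ^+ 2).
Proof.
move=> a0 us; set w := v - u.
have E : v ^+ 2 - u ^+ 2 = 2 * (u * w) + w ^+ 2 by rewrite /w; ring.
have n1 : `|w| <= `|v| + `|u| by exact: ler_normB.
have n2 : - (u * w) <= `|u| * `|w| by rewrite -normrM -normrN ler_norm.
have n3 : `|u| * `|w| <= a * `|w| by apply: ler_wpM2r.
have w2 : 0 <= w ^+ 2 := sqr_ge0 w.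
have f1 : 2 * alpha * (`|w| - 2 * `|u|) <= 2 * alpha * (`|v| - `|u|).
  by rewrite ler_pM2l ?mulr_gt0 //; lra.
lra.
Qed.

Theorem mainTheorem6 (R : rcfType) (m n k : nat) (A : 'M[R]_(m, n)) (Delta : R)
  (x0 : 'cV[R]_n) (S : {set 'I_n}) (alpha : R) (xstar : 'cV[R]_n) :
  (0 < m)%N -> (m < n)%N ->
  0 < Delta ->
  (forall h : 'cV[R]_n, A *m h = 0 -> h != 0 ->
     Num.sqrt (m%:R / Delta) * norm2 h <= norm1 h) ->
  largest_k_support k x0 S ->
  normInf (restrict (~: S) x0) < alpha ->
  let C3 := (alpha + normInf (restrict S x0)) / (alpha - normInf (restrict (~: S) x0)) in
  let C4 := (2 * alpha) / (alpha - normInf (restrict (~: S) x0)) in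
  4 * (1 + C3) ^+ 2 * k%:R * Delta <= m%:R ->
  is_P2_solution A (A *m x0) alpha xstar ->
  norm1 (xstar - x0) <= 4 * C4 * norm1 (restrict (~: S) x0).
Proof.
move=> m0 mn D0 NSP [cardS _] Ha C3 C4 Hm [Axs Hmin].
rewrite /C3 /C4 {C3 C4} in Hm *.
set s := normInf (restrict S x0) in Hm *.
set a := normInf (restrict (~: S) x0) in Ha Hm *.
set h := xstar - x0.
have hE : forall i, h i 0 = xstar i 0 - x0 i 0 by move=> i; rewrite !mxE.
have Ah : A *m h = 0 by rewrite /h mulmxBr Axs subrr.
have a0 : 0 <= a by apply: normInf_ge0.
have s0 : 0 <= s by apply: normInf_ge0.
have al0 : 0 < alpha by apply: le_lt_trans Ha.
have d0 : 0 < alpha - a by rewrite subr_gt0.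
have sS : forall i, i \in S -> `|x0 i 0| <= s.
  by move=> i iS; have := @normInf_ge R n (restrict S x0) i; rewrite mxE iS.
have aZ : forall i, i \notin S -> `|x0 i 0| <= a.
  by move=> i iS; have := @normInf_ge R n (restrict (~: S) x0) i; rewrite mxE inE iS.
set HS := \sum_(i in S) `|h i 0|.
set HZ := \sum_(i in ~: S) `|h i 0|.
set XZ := \sum_(i in ~: S) `|x0 i 0|.
have XZE : norm1 (restrict (~: S) x0) = XZ.
  rewrite /norm1 /XZ (big_mkcond (fun i => i \in ~: S)) /=.
  by apply: eq_bigr => i _; rewrite mxE; case: ifP => //; rewrite normr0.
have NE : norm1 h = HS + HZ.
  rewrite /norm1 (bigID (mem S)) /=; congr (_ + _).
  by apply: eq_bigl => i; rewrite inE.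
rewrite XZE NE.
have HS0 : 0 <= HS by apply: sumr_ge0.
have HZ0 : 0 <= HZ by apply: sumr_ge0.
have XZ0 : 0 <= XZ by apply: sumr_ge0.
have cone : (alpha - a) * HZ <= (alpha + s) * HS + 2 * alpha * XZ.
  have n2E : forall x : 'cV[R]_n, norm2 x ^+ 2 = \sum_i x i 0 ^+ 2.
    by move=> x; rewrite /norm2 sqr_sqrtr //; apply: sumr_ge0 => i _; exact: sqr_ge0.
  have K := Hmin x0 erefl.
  rewrite /P2_obj !n2E /norm1 in K.
  have K2 : \sum_i (2 * alpha * (`|xstar i 0| - `|x0 i 0|) + (xstar i 0 ^+ 2 - x0 i 0 ^+ 2)) <= 0.
    rewrite big_split /= -mulr_sumr !sumrB.
    have a2 : 0 < 2 * alpha by rewrite mulr_gt0.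
    rewrite -(ler_pM2l a2) in K.
    rewrite !mulrDr !mulrA mulfV ?gt_eqF // !mul1r in K.
    lra.
  pose g i := if i \in S then - (2 * (alpha + s) * `|h i 0|)
              else 2 * (alpha - a) * `|h i 0| - 4 * alpha * `|x0 i 0|.
  have K3 : \sum_i g i <= 0.
    apply: le_trans K2; apply: ler_sum => i _; rewrite /g hE.
    case: (boolP (i \in S)) => iS.
      exact: pt_S (sS i iS).
    exact: pt_Z (aZ i iS).
  rewrite (bigID (mem S)) /= in K3.
  have E1 : \sum_(i | i \in S) g i = - (2 * (alpha + s) * HS).
    rewrite /HS mulr_sumr -sumrN; apply: eq_bigr => i iS; by rewrite /g iS.
  have E2 : \sum_(i | ~~ (i \in S)) g i = 2 * (alpha - a) * HZ - 4 * alpha * XZ.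
    rewrite /HZ /XZ !mulr_sumr -sumrB.
    rewrite (eq_bigl (fun i => i \in ~: S)); last by move=> i; rewrite inE.
    by apply: eq_bigr => i iS; rewrite /g; move: iS; rewrite inE => /negbTE ->.
  rewrite E1 E2 in K3.
  lra.
have nsp : 2 * (alpha - a + alpha + s) * HS <= (alpha - a) * (HS + HZ).
  set N := HS + HZ.
  have N0 : 0 <= N by rewrite addr_ge0.
  set Q := \sum_i h i 0 ^+ 2.
  have Q0 : 0 <= Q by apply: sumr_ge0 => i _; exact: sqr_ge0.
  have CS : HS ^+ 2 <= k%:R * Q.
    have := @cs_sum R _ S (fun i => `|h i 0|).
    rewrite cardS => /le_trans; apply.
    apply: ler_wpM2l; first exact: ler0n.
    rewrite /Q big_mkcond /=; apply: ler_sum => i _.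
    case: ifP => _; last exact: sqr_ge0.
    by rewrite -normrX ger0_norm ?sqr_ge0.
  have NS : m%:R / Delta * Q <= N ^+ 2.
    have [h0|hne] := eqVneq h 0.
      have Qz : Q = 0 by rewrite /Q big1 // => i _; rewrite h0 mxE expr0n.
      by rewrite Qz mulr0 sqr_ge0.
    have := NSP h Ah hne.
    rewrite NE -/N -ler_sqr; last 2 first.
    - by rewrite nnegrE mulr_ge0 // /norm2 sqrtr_ge0.
    - by rewrite nnegrE.
    rewrite exprMn sqr_sqrtr; last by rewrite divr_ge0 // ltW.
    by rewrite /norm2 sqr_sqrtr.
  set c := 1 + (alpha + s) / (alpha - a) in Hm.
  have c0 : 0 < c.
    have : 0 <= (alpha + s) / (alpha - a).
      by apply: divr_ge0; [apply: addr_ge0 => //; exact: ltW | exact: ltW].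
    rewrite /c; lra.
  have cE : 2 * (alpha - a + alpha + s) * HS = (alpha - a) * (2 * c * HS).
    by rewrite /c; field; rewrite gt_eqF.
  rewrite cE; apply: ler_wpM2l; first exact: ltW.
  have [k0|kpos] := eqVneq k 0%N.
    move: CS; rewrite k0 mul0r => CS.
    have : HS ^+ 2 == 0 by rewrite eq_le CS sqr_ge0.
    by rewrite sqrf_eq0 => /eqP ->; rewrite mulr0.
  have kD : 0 < k%:R * Delta by rewrite mulr_gt0 // ltr0n lt0n.
  have e1 : 4 * c ^+ 2 * k%:R * Delta * HS ^+ 2 <= m%:R * HS ^+ 2.
    by rewrite ler_wpM2r // sqr_ge0.
  have e2 : m%:R * HS ^+ 2 <= m%:R * (k%:R * Q) by apply: ler_wpM2l => //; exact: ler0n.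
  have e3 : m%:R * (k%:R * Q) = (k%:R * Delta) * (m%:R / Delta * Q).
    by field; rewrite gt_eqF.
  have e4 : (k%:R * Delta) * (m%:R / Delta * Q) <= (k%:R * Delta) * N ^+ 2.
    by apply: ler_wpM2l => //; exact: ltW.
  have e5 : (k%:R * Delta) * ((2 * c * HS) ^+ 2) <= (k%:R * Delta) * N ^+ 2.
    have -> : (k%:R * Delta) * ((2 * c * HS) ^+ 2) = 4 * c ^+ 2 * k%:R * Delta * HS ^+ 2 by ring.
    by apply: le_trans e4; rewrite -e3; apply: le_trans e2.
  move: e5; rewrite ler_pM2l // ler_sqr // nnegrE //.
  by rewrite mulr_ge0 // mulr_ge0 // ltW.
have aX : 0 <= alpha * XZ by apply: mulr_ge0 => //; apply: ltW.
rewrite -(ler_pM2l d0).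
have -> : (alpha - a) * (4 * (2 * alpha / (alpha - a)) * XZ) = 8 * (alpha * XZ).
  by field; rewrite gt_eqF.
lra.
Qed.
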